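(* Let $c\in\mathbb{R}^n$, and suppose $S(A,b)\neq\emptyset$. Let $e^*\in E$ be such that $\underline{X}(e^* )\in S(A,b)$ and $\underline{X}(e^* )$ minimizes $Z_1(x)=\sum_{j\in J}c^+_jx_j$ over $S(A,b)$, where $c^+_j=\max\{c_j,0\}$. Define $x^*\in[0,1]^n$ by $x^*_j=\bar X_j$ if $c_j<0$ and $x^*_j=\underline{X}(e^* )_j$ if $c_j\ge0$. Then $\sum_{j\in J}c_jx^*_j\le\sum_{j\in J}c_jx_j$ for every $x\in S(A,b)$.
   Context: Let $\lambda>0$. The Aczel–Alsina t-norm is $T^{\lambda}_{AA}:[0,1]^2\to[0,1]$, $T^{\lambda}_{AA}(a,x)=0$ if $a=0$ or $x=0$, and $T^{\lambda}_{AA}(a,x)=\exp\!\left(-\left[(-\ln a)^{\lambda}+(-\ln x)^{\lambda}\right]^{1/\lambda}\right)$ otherwise. Let $I=\{1,\dots,m\}$, $J=\{1,\dots,n\}$, $A=(a_{ij})$ with $a_{ij}\in[0,1]$, and $b=(b_i)_{i\in I}$ with $b_i\in[0,1]$. $S(A,b)=\{x\in[0,1]^n: \max_{j\in J} T^{\lambda}_{AA}(a_{ij},x_j)=b_i \text{ for all } i\in I\}$. For each $i\in I$, $J_i=\{j\in J: a_{ij}\ge b_i\}$. For $i\in I$ define $\hat x_i\in[0,1]^n$ by: for $k\in J_i$ with $b_i\neq 0$, $(\hat x_i)_k=\exp\!\left(-\left[(-\ln b_i)^{\lambda}-(-\ln a_{ik})^{\lambda}\right]^{1/\lambda}\right)$;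 for $k\in J_i$ with $a_{ik}>b_i=0$, $(\hat x_i)_k=0$; for $k\in J_i$ with $a_{ik}=b_i=0$, $(\hat x_i)_k=1$; for $k\notin J_i$, $(\hat x_i)_k=1$. Let $\bar X\in[0,1]^n$ be the componentwise minimum $\bar X_k=\min_{i\in I}(\hat x_i)_k$. For $i\in I$ and $j\in J_i$ define $\check x_i(j)\in[0,1]^n$ by $\check x_i(j)_k=\exp\!\left(-\left[(-\ln b_i)^{\lambda}-(-\ln a_{ij})^{\lambda}\right]^{1/\lambda}\right)$ if $b_i\neq0$ and $k=j$, and $\check x_i(j)_k=0$ otherwise. Let $E$ be the set of all maps $e:I\to J$ with $e(i)\in J_i$ for every $i\in I$. For $e\in E$ define $\underline{X}(e)\in[0,1]^n$ by $\underline{X}(e)_k=\max_{i\in I}\check x_i(e(i))_k$ for $k\in J$. *)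

(* Defs.v *)
From mathcomp Require Import all_boot all_order all_algebra.
From mathcomp Require Import reals sequences exp.
Set Implicit Arguments. Unset Strict Implicit. Unset Printing Implicit Defensive.
Import Order.TTheory GRing.Theory Num.Theory.
Local Open Scope ring_scope.

Section AA.
Variable R : realType.
Variable lam : R.

Definition TAA (a x : R) : R :=
  if (a == 0) || (x == 0) then 0
  else expR (- (((- ln a) `^ lam + (- ln x) `^ lam) `^ (lam^-1))).

Variables (m n : nat) (A : 'I_m -> 'I_n -> R) (b : 'I_m -> R).

Definition unit_box (x : 'I_n -> R) : Prop := forall j, 0 <= x j <= 1.

(* x in S(A,b): max_j T(a_ij, x_j) = b_i for all i (max of nonnegative values, base 0) *)
Definition sol (x : 'I_n -> R) : Prop :=
  unit_box x /\ forall i, \big[Num.max/0]_(j < n) TAA (A i j) (x j) = b i.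

Definition inJ (i : 'I_m) (j : 'I_n) : bool := b i <= A i j.

Definition rootval (i : 'I_m) (j : 'I_n) : R :=
  expR (- (((- ln (b i)) `^ lam - (- ln (A i j)) `^ lam) `^ (lam^-1))).

Definition xhat (i : 'I_m) (k : 'I_n) : R :=
  if inJ i k then
    (if b i != 0 then rootval i k
     else if 0 < A i k then 0 else 1)
  else 1.

Definition Xbar (k : 'I_n) : R := \big[Num.min/1]_(i < m) xhat i k.

Definition xcheck (i : 'I_m) (j : 'I_n) (k : 'I_n) : R :=
  if (b i != 0) && (k == j) then rootval i j else 0.

Definition in_E (e : 'I_m -> 'I_n) : Prop := forall i, inJ i (e i).

Definition Xlow (e : 'I_m -> 'I_n) (k : 'I_n) : R :=
  \big[Num.max/0]_(i < m) xcheck i (e i) k.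

End AA.

(* Main.v *)
Require Import Defs.
From mathcomp Require Import all_boot all_order all_algebra.
From mathcomp Require Import reals sequences exp.
Import Order.TTheory GRing.Theory Num.Theory.
Local Open Scope ring_scope.

Section Helpers.
Variable R : realType.

Lemma powR_mono_rev (lam p q : R) : 0 < lam -> 0 <= p -> 0 <= q ->
  p `^ lam <= q `^ lam -> p <= q.
Proof.
move=> l0 p0 q0 H; rewrite leNgt; apply/negP => qp.
have := gt0_ltr_powR l0 q0 p0 qp; by rewrite ltNge H.
Qed.

Lemma powR_inv_cancel (lam s : R) : 0 < lam -> 0 <= s -> (s `^ lam^-1) `^ lam = s.
Proof.
move=> l0 s0; rewrite -powRrM mulVf ?gt_eqF // powRr1 //.
Qed.

Lemma nlnge0 (a : R) : a <= 1 -> 0 <= - ln a.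
Proof. by move=> h; rewrite oppr_ge0 ln_le0. Qed.

End Helpers.
Arguments powR_inv_cancel {R lam s}.
Arguments powR_mono_rev {R lam p q}.
Arguments nlnge0 {R a}.

Lemma sol_le_xhat (R : realType) (lam : R) (m n : nat)
  (A : 'I_m -> 'I_n -> R) (b : 'I_m -> R) x i k :
  0 < lam ->
  (forall i j, 0 <= A i j <= 1) ->
  (forall i, 0 <= b i <= 1) ->
  sol lam A b x -> x k <= xhat lam A b i k.
Proof.
move=> l0 HA Hb [Hbox Hs].
have HT : TAA lam (A i k) (x k) <= b i.
  by rewrite -(Hs i) (bigD1 k) //= le_max lexx.
have /andP[xk0 xk1] := Hbox k.
have /andP[a0 a1] := HA i k.
have /andP[b0 b1] := Hb i.
rewrite /xhat; case: ifP => hJ //; rewrite /inJ in hJ.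
case: ifP => hb.
- rewrite /rootval.
  have [->|xpos] := eqVneq (x k) 0; first exact: expR_ge0.
  have bpos : 0 < b i by rewrite lt_def hb b0.
  have apos : 0 < A i k by apply: lt_le_trans hJ.
  move: HT; rewrite /TAA (negbTE xpos) gt_eqF //= => HT.
  have xp : 0 < x k by rewrite lt_def xpos xk0.
  rewrite -{1}(lnK xp) ler_expR lerNr.
  set u := (- ln (A i k)) `^ lam; set v := (- ln (x k)) `^ lam;
  set w := (- ln (b i)) `^ lam.
  have u0 : 0 <= u by apply: powR_ge0.
  have v0 : 0 <= v by apply: powR_ge0.
  have H1 : - ln (b i) <= (u + v) `^ lam^-1.
    by rewrite -(lnK bpos) ler_expR lerNl in HT.
  have H2 : w <= u + v.
    rewrite -(powR_inv_cancel l0 (addr_ge0 u0 v0)).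
    have n1 : - ln (b i) \is Num.nneg by rewrite nnegrE nlnge0.
    have n2 : (u + v) `^ lam^-1 \is Num.nneg by rewrite nnegrE powR_ge0.
    exact: (ge0_ler_powR (ltW l0) n1 n2 H1).
  have wu : 0 <= w - u.
    rewrite subr_ge0 /u /w.
    have n1 : - ln (A i k) \is Num.nneg by rewrite nnegrE nlnge0.
    have n2 : - ln (b i) \is Num.nneg by rewrite nnegrE nlnge0.
    have H3 : - ln (A i k) <= - ln (b i) by rewrite lerN2 ler_ln.
    exact: (ge0_ler_powR (ltW l0) n1 n2 H3).
  apply: (powR_mono_rev l0); rewrite ?powR_ge0 ?nlnge0 //.
  rewrite powR_inv_cancel // -/v; by rewrite lerBlDl.
- have b00 : b i = 0 by apply/eqP; rewrite -(negbK (b i == 0)) hb.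
  case: ifP => ha //.
  have [//|xpos] := eqVneq (x k) 0; first by move=> ->.
  move: HT; rewrite /TAA (negbTE xpos) gt_eqF //= b00 => HT.
  by have := expR_gt0 (- ((- ln (A i k)) `^ lam + (- ln (x k)) `^ lam) `^ lam^-1);
    rewrite ltNge HT.
Qed.
Theorem theorem2 (R : realType) (lam : R) (m n : nat)
  (A : 'I_m -> 'I_n -> R) (b : 'I_m -> R) (c : 'I_n -> R) (estar : 'I_m -> 'I_n) :
  0 < lam ->
  (forall i j, 0 <= A i j <= 1) ->
  (forall i, 0 <= b i <= 1) ->
  (exists x, sol lam A b x) ->
  in_E A b estar ->
  sol lam A b (Xlow lam A b estar) ->
  (forall x, sol lam A b x ->
     \sum_(j < n) Num.max (c j) 0 * Xlow lam A b estar j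
       <= \sum_(j < n) Num.max (c j) 0 * x j) ->
  let xstar := fun j => if c j < 0 then Xbar lam A b j else Xlow lam A b estar j in
  forall x, sol lam A b x ->
    \sum_(j < n) c j * xstar j <= \sum_(j < n) c j * x j.
Proof.
move=> l0 HA Hb _ _ _ Hmin xstar x Hx.
have Hle : forall j, x j <= Xbar lam A b j.
  move=> j; rewrite /Xbar; elim/big_ind: _ => //.
  - by have /andP[] := (Hx.1 j).
  - by move=> p q hp hq; rewrite le_min hp hq.
  - by move=> i _; apply: sol_le_xhat.
have E1 : \sum_(j < n) c j * xstar j = \sum_(j < n) Num.max (c j) 0 * Xlow lam A b estar j
   + \sum_(j < n) Num.min (c j) 0 * Xbar lam A b j.
  rewrite -big_split; apply: eq_bigr => j _; rewrite /xstar.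
  by case: (ltP (c j) 0) => hc; rewrite /= mul0r ?add0r ?addr0.
have E2 : \sum_(j < n) c j * x j = \sum_(j < n) Num.max (c j) 0 * x j
   + \sum_(j < n) Num.min (c j) 0 * x j.
  rewrite -big_split; apply: eq_bigr => j _.
  by case: (leP (c j) 0) => hc; rewrite /= mul0r ?add0r ?addr0.
rewrite E1 E2; apply: lerD; first exact: Hmin.
apply: ler_sum => j _; rewrite ler_wnM2l //.
by rewrite ge_min lexx orbT.
Qed.
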